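(* Let $\ell>1$ be an odd integer. There exists $N_\ell\in\mathbb{N}$ such that, with the relation $\sim$ defined using $N=N_\ell$, the following holds. One can associate to each interval $J\subset\mathbb{R}_+$ a parallelogram $R(J)\subset\mathbb{R}^2$ such that $S_\ell(\tau,\tau')\subset R(\tau+\tau')$ for all dyadic intervals $\tau\sim\tau'$ in $\mathbb{R}_+$; moreover there exist $\beta_\ell>0$ and $\widetilde C_\ell\in\mathbb{N}$ such that for every pair of dyadic intervals $\tau\sim\tau'$ in $\mathbb{R}_+$, $$\#\{(\tau_1,\tau_1'):\ \tau_1\sim\tau_1'\subset\mathbb{R}_+ \text{ dyadic},\ (1+\beta_\ell)R(\tau+\tau')\cap(1+\beta_\ell)R(\tau_1+\tau_1')\ne\emptyset\}\le\widetilde C_\ell .$$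
   Context: $S_\ell(\tau,\tau'):=\{(\xi+\xi',\xi^\ell+(\xi')^\ell):\xi\in\tau,\xi'\in\tau'\}$. For a parallelogram $R$ and $\beta>0$, $(1+\beta)R$ is its dilate by factor $1+\beta$ about its center. A dyadic interval is $[k,k+1)2^j$ with $k,j\in\mathbb{Z}$, with length $|\tau|$ and center $c(\tau)$; $m$-parent = dyadic interval of length $2^m|\tau|$ containing $\tau$; two intervals are adjacent if they have equal length and share an endpoint; $\tau\sim\tau'$ means $|\tau|=|\tau'|$, the $m$-parents of $\tau,\tau'$ are not adjacent for $m=0,\dots,N-1$, and their $N$-parents are adjacent. $\tau+\tau'$ is the Minkowski sum. *)

(* Defs.v *)
From Stdlib Require Import Reals ZArith List Arith.
Open Scope R_scope.

(* Dyadic interval [k 2^j, (k+1) 2^j), indexed by (j, k) : Z * Z. *)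
Definition dyadic (d : Z * Z) : R -> Prop :=
  fun x => IZR (snd d) * powerRZ 2 (fst d) <= x /\
           x < IZR (snd d + 1) * powerRZ 2 (fst d).

Definition in_Rplus (d : Z * Z) : Prop := (0 <= snd d)%Z.

Definition parent (m : nat) (d : Z * Z) : Z * Z :=
  (fst d + Z.of_nat m, Z.div (snd d) (2 ^ Z.of_nat m))%Z.

Definition adjacent (d d' : Z * Z) : Prop :=
  fst d = fst d' /\ Z.abs (snd d - snd d') = 1%Z.

Definition sim (N : nat) (d d' : Z * Z) : Prop :=
  fst d = fst d' /\
  (forall m : nat, (m < N)%nat -> ~ adjacent (parent m d) (parent m d')) /\
  adjacent (parent N d) (parent N d').

Definition msum (A B : R -> Prop) : R -> Prop :=
  fun x => exists a b, A a /\ B b /\ x = a + b.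

Definition S_ell (l : nat) (A B : R -> Prop) : R * R -> Prop :=
  fun p => exists a b, A a /\ B b /\ p = (a + b, a ^ l + b ^ l).

(* A parallelogram is given by a center c and two edge half-vectors u, v
   (required linearly independent); it is the closed set
   { c + s u + t v : |s| <= 1, |t| <= 1 }. *)
Record para := Para { pc : R * R; pu : R * R; pv : R * R }.

Definition nondegenerate (P : para) : Prop :=
  fst (pu P) * snd (pv P) - snd (pu P) * fst (pv P) <> 0.

Definition dilate (lam : R) (P : para) : R * R -> Prop :=
  fun x => exists s t, Rabs s <= lam /\ Rabs t <= lam /\
    x = (fst (pc P) + s * fst (pu P) + t * fst (pv P),
         snd (pc P) + s * snd (pu P) + t * snd (pv P)).

Definition pset (P : para) : R * R -> Prop := dilate 1 P.

(* Main.v *)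
Require Import Defs.
From Stdlib Require Import Reals ZArith List Arith Lra Lia Psatz ClassicalEpsilon FinFun.
Open Scope R_scope.
Open Scope R_scope.

Definition Rem (n : nat) (m0 e : R) : R :=
  (m0+e)^(n+2) - m0^(n+2) - INR (n+2) * m0^(n+1) * e.

Lemma Rem_step n m0 e :
  Rem (S n) m0 e = (m0+e) * Rem n m0 e + INR (n+2) * m0^(n+1) * e^2.
Proof.
  unfold Rem. replace (S n + 2)%nat with (S (n+2)) by lia.
  replace (S n + 1)%nat with (S (n+1)) by lia.
  replace (n+2)%nat with (S (n+1)) by lia.
  rewrite !S_INR. simpl. ring.
Qed.

Lemma Rem_bound n m0 e : 0 <= m0 -> Rabs e <= m0 ->
  m0^n * e^2 <= Rem n m0 e <= 4^(n+2) * m0^n * e^2.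
Proof.
  intros H0 He. assert (Hpe: 0 <= m0 + e /\ m0 + e <= 2*m0).
  { unfold Rabs in He; destruct (Rcase_abs e); lra. }
  induction n as [|n IH].
  - unfold Rem. simpl. split; nra.
  - rewrite Rem_step. destruct IH as [IH1 IH2].
    assert (Hp: 0 <= m0^n) by (apply pow_le; lra).
    assert (He2: 0 <= e^2) by nra.
    assert (HI: 1 <= INR (n+2)) by (rewrite plus_INR; simpl; pose proof (pos_INR n); lra).
    assert (HI2: INR (n+2) <= 4^(n+2)).
    { clear. induction n. simpl. lra. replace (S n + 2)%nat with (S (n+2)) by lia.
      rewrite S_INR. simpl. assert (1 <= 4^(n+2)) by (apply pow_R1_Rle; lra). lra. }
    assert (Hmn: m0^(n+1) = m0 * m0^n) by (rewrite Nat.add_comm; simpl; ring).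
    assert (Hmn2: m0^(S n) = m0 * m0^n) by (simpl; ring).
    assert (H4: 4^(S n + 2) = 4 * 4^(n+2)) by (replace (S n + 2)%nat with (S (n+2)) by lia; simpl; ring).
    rewrite Hmn, Hmn2, H4.
    set (A := m0^n) in *. set (B := Rem n m0 e) in *. set (c := INR (n+2)) in *.
    set (D := 4^(n+2)) in *.
    assert (0 <= A*e^2) by nra.
    assert (0 <= m0*A*e^2) by nra.
    split.
    + assert ((m0+e)*B >= 0) by nra.
      assert (c*(m0*A)*e^2 >= m0*A*e^2) by nra. nra.
    + assert ((m0+e)*B <= 2*m0*(D*A*e^2)) by nra.
      assert (c*(m0*A)*e^2 <= D*(m0*A)*e^2) by nra. nra.
Qed.
Open Scope R_scope.

Lemma Phi_eq n a b : a^(n+2) + b^(n+2) - 2*((a+b)/2)^(n+2) =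
  Rem n ((a+b)/2) ((b-a)/2) + Rem n ((a+b)/2) (-((b-a)/2)).
Proof.
  unfold Rem. replace ((a+b)/2 + (b-a)/2) with b by field.
  replace ((a+b)/2 + - ((b-a)/2)) with a by field. ring.
Qed.

Lemma Phi_bound n a b : 0 <= a -> 0 <= b ->
  2 * ((a+b)/2)^n * ((b-a)/2)^2 <= a^(n+2) + b^(n+2) - 2*((a+b)/2)^(n+2)
  <= 2 * 4^(n+2) * ((a+b)/2)^n * ((b-a)/2)^2.
Proof.
  intros Ha Hb. rewrite Phi_eq.
  assert (H0: 0 <= (a+b)/2) by lra.
  assert (H1: Rabs ((b-a)/2) <= (a+b)/2) by (unfold Rabs; destruct Rcase_abs; lra).
  assert (H2: Rabs (-((b-a)/2)) <= (a+b)/2) by (rewrite Rabs_Ropp; auto).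
  pose proof (Rem_bound n _ _ H0 H1). pose proof (Rem_bound n _ _ H0 H2).
  replace ((- ((b - a) / 2)) ^ 2) with (((b - a) / 2) ^ 2) in * by ring.
  lra.
Qed.

Definition Gc (n : nat) : R := 4^(n+2).
Definition Offc n := 2 * Gc n ^ 2 + 100 * Gc n ^ 4.
Definition Hc n := 100 * Gc n ^ 4 - 2 * Gc n ^ 2.

Definition Uc n P sR := (((sR + 1) * P / 2) / 2)^n * P^2.

Definition parR (n : nat) (P sR : R) : para :=
  let xc := (sR + 1) * P in
  let mc := xc / 2 in
  let U := Uc n P sR in
  Para (xc, 2 * mc^(n+2) + Offc n * U)
       (P, INR (n+2) * mc^(n+1) * P)
       (0, if Req_EM_T U 0 then 1 else Hc n * U).

Lemma G_ge1 n : 1 <= Gc n.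
Proof. unfold Gc. apply pow_R1_Rle. lra. Qed.

Lemma Hc_pos n : 0 < Hc n.
Proof. unfold Hc. pose proof (G_ge1 n). set (G := Gc n) in *.
  assert (1 <= G^2) by nra. assert (G^4 = G^2 * G^2) by ring. nra. Qed.

Lemma parR_nondeg n P sR : 0 < P -> nondegenerate (parR n P sR).
Proof.
  intros HP. unfold nondegenerate, parR. simpl.
  destruct (Req_EM_T _ 0) as [E|E].
  - intro; nra.
  - pose proof (Hc_pos n). intro Hz.
    assert (P * (Hc n * Uc n P sR) = 0) by lra.
    apply Rmult_integral in H0. destruct H0; [lra|].
    apply Rmult_integral in H0. destruct H0; [lra|]. contradiction.
Qed.

Lemma pow_mult_le n x y : 0 <= x <= y -> x^n <= y^n.
Proof. intros; apply pow_incr; lra. Qed.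

Lemma Rem_e_exp n mc e : 2*(mc+e)^(n+2) = 2*mc^(n+2) + INR (n+2) * mc^(n+1) * (2*e) + 2 * Rem n mc e.
Proof. unfold Rem. ring. Qed.
Open Scope R_scope.

Lemma Rabs_inv x a : Rabs x <= a -> -a <= x <= a.
Proof. unfold Rabs; destruct Rcase_abs; lra. Qed.

Lemma abs_div_le1 v h : 0 < h -> -h <= v <= h -> Rabs (v/h) <= 1.
Proof. intros Hh Hv. apply Rabs_le. split.
  apply Rmult_le_reg_r with h; auto. unfold Rdiv. rewrite Rmult_assoc, Rinv_l; lra.
  apply Rmult_le_reg_r with h; auto. unfold Rdiv. rewrite Rmult_assoc, Rinv_l; lra. Qed.

Lemma four_n n : 4^n <= Gc n /\ 2^n <= Gc n /\ 0 < 2^n.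
Proof.
  unfold Gc. split. apply Rle_pow; [lra|lia].
  split. apply Rle_trans with (4^n). apply pow_incr; lra. apply Rle_pow; [lra|lia].
  apply pow_lt; lra.
Qed.

Lemma contain n P sR a b : 0 < P -> 3 <= sR -> 0 <= a -> 0 <= b ->
  sR*P <= a+b <= (sR+2)*P ->
  2*Gc n*P <= Rabs((b-a)/2) <= 8*Gc n*P ->
  pset (parR n P sR) (a+b, a^(n+2)+b^(n+2)).
Proof.
  intros HP Hs Ha Hb Hx Hd.
  unfold pset, dilate, parR. simpl.
  set (xc := (sR+1)*P). set (mc := xc/2). set (mu := mc/2).
  assert (HU : Uc n P sR = mu^n * P^2) by reflexivity.
  assert (Hmu : 0 < mu) by (unfold mu, mc, xc; nra).
  assert (Hmun : 0 < mu^n) by (apply pow_lt; lra).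
  assert (HUp : 0 < mu^n * P^2) by (apply Rmult_lt_0_compat; [lra| apply pow_lt; lra]).
  destruct (Req_EM_T (Uc n P sR) 0) as [E|_]; [rewrite HU in E; lra|].
  rewrite HU. set (U := mu^n * P^2) in *.
  pose proof (G_ge1 n) as HG1. pose proof (four_n n) as [H4n [H2n H2p]].
  set (G := Gc n) in *.
  pose proof (Hc_pos n) as HH.
  set (m := (a+b)/2) in *. set (d := (b-a)/2) in *. set (e := m - mc) in *.
  assert (He : Rabs e <= P/2) by (apply Rabs_le; unfold e, m, mc, xc; lra).
  assert (Hmc : 2*P <= mc) by (unfold mc, xc; nra).
  assert (Hm1 : mu <= m <= 4*mu) by (apply Rabs_inv in He; unfold e, mu in *; lra).
  pose proof (Phi_bound n a b Ha Hb) as HPhi. fold m d in HPhi.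
  set (Phi := a^(n+2) + b^(n+2) - 2*m^(n+2)) in *.
  assert (Hd2 : 4*G^2*P^2 <= d^2 <= 64*G^2*P^2).
  { destruct Hd as [Hd1 Hd2]. rewrite <- (pow2_abs d).
    assert (0 <= 2*G*P) by nra. split.
    replace (4*G^2*P^2) with ((2*G*P)^2) by ring. apply pow_incr; lra.
    replace (64*G^2*P^2) with ((8*G*P)^2) by ring. apply pow_incr; pose proof (Rabs_pos d); lra. }
  assert (Hmn : mu^n <= m^n <= 4^n * mu^n).
  { split. apply pow_incr; lra. rewrite <- Rpow_mult_distr. apply pow_incr; lra. }
  assert (HPhiL : 8*G^2*U <= Phi).
  { apply Rle_trans with (2*m^n*d^2); [|lra]. unfold U.
    assert (0 <= mu^n) by lra. 
    assert (mu^n * (4*G^2*P^2) <= m^n * d^2) by (apply Rmult_le_compat; nra).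
    nra. }
  assert (HPhiU : Phi <= 128*G^4*U).
  { apply Rle_trans with (2*4^(n+2)*m^n*d^2); [lra|]. change (4^(n+2)) with G. unfold U.
    assert (m^n * d^2 <= (G*mu^n) * (64*G^2*P^2)).
    { apply Rmult_le_compat; try nra. }
    assert (2*G*(m^n*d^2) <= 2*G*((G*mu^n)*(64*G^2*P^2))) by (apply Rmult_le_compat_l; lra).
    assert (2*G*((G*mu^n)*(64*G^2*P^2)) = 128*G^4*(mu^n*P^2)) by ring.
    assert (2*G*m^n*d^2 = 2*G*(m^n*d^2)) by ring. lra. }
  assert (He0 : Rabs e <= mc) by lra.
  assert (Hmc0 : 0 <= mc) by lra.
  pose proof (Rem_bound n mc e Hmc0 He0) as [HR1 HR2]. change (4^(n+2)) with G in HR2.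
  assert (Hmcn : mc^n = 2^n * mu^n) by (unfold mu; rewrite <- Rpow_mult_distr; f_equal; field).
  assert (He2 : e^2 <= P^2/4) by (rewrite <- (pow2_abs e); pose proof (Rabs_pos e); nra).
  assert (HRem : 0 <= Rem n mc e <= G^2*U/2).
  { split. apply Rle_trans with (mc^n*e^2); [|lra]. pose proof (pow_le mc n Hmc0). nra.
    apply Rle_trans with (G*mc^n*e^2); [lra|]. rewrite Hmcn. unfold U.
    assert (2^n*mu^n*e^2 <= G*mu^n*(P^2/4)).
    { apply Rmult_le_compat; try nra. }
    assert (G*(2^n*mu^n*e^2) <= G*(G*mu^n*(P^2/4))) by (apply Rmult_le_compat_l; lra).
    assert (0 <= G^2*(mu^n*P^2)) by (apply Rmult_le_pos; nra).
    assert (G*(2^n*mu^n)*e^2 = G*(2^n*mu^n*e^2)) by ring.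
    assert (G*(G*mu^n*(P^2/4)) = G^2*(mu^n*P^2)/4) by field. lra. }
  assert (Hexp := Rem_e_exp n mc e).
  replace (mc + e) with m in Hexp by (unfold e; ring).
  exists ((a+b - xc)/P), ((Phi + 2*Rem n mc e - Offc n * U)/(Hc n * U)).
  assert (HHU : 0 < Hc n * U) by nra.
  split; [| split].
  - apply Rabs_le. split; [apply Rmult_le_reg_r with P; auto|apply Rmult_le_reg_r with P; auto];
    field_simplify; unfold xc; try lra.
  - apply abs_div_le1; auto. unfold Offc, Hc. change (Gc n) with G.
    assert (HG2 : 1 <= G^2) by (replace (G^2) with (G*G) by ring; nra).
    assert (G^4 - G^2 = G^2*(G^2-1)) by ring.
    assert (0 <= G^4 - G^2) by (rewrite H; apply Rmult_le_pos; lra).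
    assert (0 <= G^2*U) by (apply Rmult_le_pos; lra).
    assert (0 <= (G^4 - G^2)*U) by (apply Rmult_le_pos; lra).
    split; nra.
  - f_equal. field; lra.
    assert (E1: (Phi + 2*Rem n mc e - Offc n * U)/(Hc n * U)*(Hc n * U) = Phi + 2*Rem n mc e - Offc n * U) by (field; lra).
    set (c := INR (n+2) * mc^(n+1)) in *.
    assert (E2: (a+b-xc)/P*(c*P) = c*(a+b-xc)) by (field; lra).
    rewrite E1, E2.
    assert (Hxe: 2*e = a+b - xc) by (unfold e, m, mc; field).
    rewrite Hxe in Hexp. unfold Phi. lra.
Qed.
Open Scope R_scope.

Definition betac n := / (100 * Gc n ^ 2).

Lemma betac_pos n : 0 < betac n /\ betac n <= 1/100 /\ betac n * Hc n <= Gc n ^ 2.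
Proof.
  pose proof (G_ge1 n). unfold betac, Hc. set (G := Gc n) in *.
  assert (HG2 : 1 <= G^2) by (replace (G^2) with (G*G) by ring; nra).
  split. apply Rinv_0_lt_compat; lra.
  split. replace (1/100) with (/100) by field. apply Rinv_le_contravar; lra.
  replace (/(100*G^2) * (100*G^4 - 2*G^2)) with (G^2 - 2/100) by (field; lra). lra.
Qed.

Lemma dil n P sR x y : 0 < P -> 3 <= sR ->
  dilate (1 + betac n) (parR n P sR) (x, y) ->
  Rabs (x - (sR+1)*P) <= 2*P /\
  Gc n ^ 2 * Uc n P sR <= y - 2*(x/2)^(n+2) <= 201 * Gc n ^ 4 * Uc n P sR.
Proof.
  intros HP Hs [sg [tau [Hsg [Htau Heq]]]].
  unfold parR in Heq. simpl in Heq.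
  set (xc := (sR+1)*P) in *. set (mc := xc/2) in *. set (mu := mc/2) in *.
  assert (HU : Uc n P sR = mu^n * P^2) by reflexivity.
  assert (Hmu : 0 < mu) by (unfold mu, mc, xc; nra).
  assert (Hmun : 0 < mu^n) by (apply pow_lt; lra).
  assert (HUp : 0 < mu^n * P^2) by (apply Rmult_lt_0_compat; [lra| apply pow_lt; lra]).
  destruct (Req_EM_T (Uc n P sR) 0) as [E|_]; [rewrite HU in E; lra|].
  rewrite HU in *. set (U := mu^n * P^2) in *.
  injection Heq as Hx Hy.
  pose proof (G_ge1 n) as HG1. pose proof (four_n n) as [H4n [H2n H2p]].
  pose proof (betac_pos n) as [Hb1 [Hb2 Hb3]].
  pose proof (Hc_pos n) as HH.
  set (G := Gc n) in *. set (be := betac n) in *.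
  apply Rabs_inv in Hsg. apply Rabs_inv in Htau.
  assert (Hxx : Rabs (x - xc) <= 2*P).
  { apply Rabs_le. rewrite Hx. split; nra. }
  split; auto.
  set (m := x/2). set (e := m - mc).
  assert (He : Rabs e <= P) by (apply Rabs_le; apply Rabs_inv in Hxx; unfold e, m, mc; lra).
  assert (Hmc : 2*P <= mc) by (unfold mc, xc; nra).
  assert (He0 : Rabs e <= mc) by lra.
  assert (Hmc0 : 0 <= mc) by lra.
  pose proof (Rem_bound n mc e Hmc0 He0) as [HR1 HR2]. change (4^(n+2)) with G in HR2.
  assert (Hmcn : mc^n = 2^n * mu^n) by (unfold mu; rewrite <- Rpow_mult_distr; f_equal; field).
  assert (He2 : e^2 <= P^2) by (rewrite <- (pow2_abs e); pose proof (Rabs_pos e);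
     apply pow_incr; lra).
  assert (HRem : 0 <= Rem n mc e <= G^2*U).
  { split. apply Rle_trans with (mc^n*e^2); [|lra]. pose proof (pow_le mc n Hmc0).
    apply Rmult_le_pos; [lra| apply pow2_ge_0].
    apply Rle_trans with (G*mc^n*e^2); [lra|]. rewrite Hmcn. unfold U.
    assert (2^n*mu^n*e^2 <= G*mu^n*(P^2)).
    { apply Rmult_le_compat; try nra. }
    assert (G*(2^n*mu^n*e^2) <= G*(G*mu^n*(P^2))) by (apply Rmult_le_compat_l; lra).
    assert (G*(2^n*mu^n)*e^2 = G*(2^n*mu^n*e^2)) by ring.
    assert (G*(G*mu^n*(P^2)) = G^2*(mu^n*P^2)) by field. lra. }
  assert (Hexp := Rem_e_exp n mc e).
  replace (mc + e) with m in Hexp by (unfold e; ring).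
  set (c := INR (n+2) * mc^(n+1)) in *.
  assert (Hxe: 2*e = sg * P) by (unfold e, m, mc; rewrite Hx; field).
  rewrite Hxe in Hexp.
  assert (Hyy : y - 2*m^(n+2) = Offc n * U + tau * (Hc n * U) - 2 * Rem n mc e).
  { rewrite Hy, Hexp. ring. }
  fold m. rewrite Hyy.
  unfold Offc. change (Gc n) with G.
  assert (HG2 : 1 <= G^2) by (replace (G^2) with (G*G) by ring; nra).
  assert (HHU : 0 < Hc n * U) by (apply Rmult_lt_0_compat; lra).
  assert (Ht1 : tau * (Hc n * U) >= -(1+be) * (Hc n * U)) by nra.
  assert (Ht2 : tau * (Hc n * U) <= (1+be) * (Hc n * U)) by nra.
  assert (Hbe : be * Hc n * U <= G^2 * U) by (apply Rmult_le_compat_r; lra).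
  unfold Hc in Hbe, Ht1, Ht2 |- *. change (Gc n) with G in Hbe, Ht1, Ht2 |- *.
  assert (0 <= G^2*U) by (apply Rmult_le_pos; lra).
  split; nra.
Qed.
Open Scope R_scope.

Lemma compare n P sR P1 sR1 x y : 0 < P -> 0 < P1 -> 3 <= sR -> 3 <= sR1 ->
  dilate (1 + betac n) (parR n P sR) (x, y) ->
  dilate (1 + betac n) (parR n P1 sR1) (x, y) ->
  P^2 <= 201 * Gc n ^ 3 * P1^2 /\ Rabs ((sR+1)*P - (sR1+1)*P1) <= 2*P + 2*P1.
Proof.
  intros HP HP1 Hs Hs1 D1 D2.
  destruct (dil n P sR x y HP Hs D1) as [Hx1 [Hy1 _]].
  destruct (dil n P1 sR1 x y HP1 Hs1 D2) as [Hx2 [_ Hy2]].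
  split.
  2:{ apply Rabs_inv in Hx1. apply Rabs_inv in Hx2. apply Rabs_le. lra. }
  unfold Uc in *.
  set (mu := (sR + 1) * P / 2 / 2) in *. set (mu1 := (sR1 + 1) * P1 / 2 / 2) in *.
  apply Rabs_inv in Hx1. apply Rabs_inv in Hx2.
  assert (Hm : mu <= 4*mu1) by (unfold mu, mu1 in *; nra).
  assert (Hmu : 0 < mu) by (unfold mu; nra).
  pose proof (four_n n) as [H4n _]. pose proof (G_ge1 n) as HG1.
  set (G := Gc n) in *.
  assert (Hmun : 0 < mu^n) by (apply pow_lt; lra).
  assert (Hmu1n : 0 <= mu1^n) by (apply pow_le; unfold mu1; nra).
  assert (Hm' : mu1 <= 4*mu) by (unfold mu, mu1 in *; nra).
  assert (Hmn' : mu1^n <= 4^n * mu^n) by (rewrite <- Rpow_mult_distr; apply pow_incr; split; [unfold mu1; nra | lra]).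
  assert (H2 : mu1^n <= G * mu^n) by (apply Rle_trans with (4^n*mu^n); [lra| apply Rmult_le_compat_r; lra]).
  assert (HG2 : 0 < G^2) by (apply pow_lt; lra).
  assert (Hc : 201 * G^4 * (mu1^n * P1^2) <= 201*G^4*(G*mu^n*P1^2)).
  { apply Rmult_le_compat_l. assert (0 < G^4) by (apply pow_lt; lra). lra.
    apply Rmult_le_compat_r. apply pow2_ge_0. lra. }
  assert (Heq : 201*G^4*(G*mu^n*P1^2) = G^2 * (mu^n * (201*G^3*P1^2))) by ring.
  assert (G^2 * (mu^n * P^2) <= G^2 * (mu^n * (201*G^3*P1^2))) by lra.
  apply Rmult_le_reg_l in H; auto. apply Rmult_le_reg_l in H; auto.
Qed.
Open Scope Z_scope.

Lemma sim_gap N0 d d' : 0 <= snd d -> 0 <= snd d' -> sim (S N0) d d' ->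
  fst d = fst d' /\ 2^Z.of_nat N0 + 1 <= Z.abs (snd d - snd d') <= 4 * 2^Z.of_nat N0 - 1.
Proof.
  destruct d as [j k], d' as [j' k']. cbn [fst snd]. intros Hk Hk' [Hj [Hn Ha]].
  cbn [fst snd] in Hj. split; auto. subst j'.
  assert (HM : 0 < 2^Z.of_nat N0) by (apply Z.pow_pos_nonneg; lia).
  set (M := 2^Z.of_nat N0) in *.
  assert (H2M : 2 ^ Z.of_nat (S N0) = M * 2) by (rewrite Nat2Z.inj_succ, Z.pow_succ_r; [unfold M; lia | lia]).
  specialize (Hn N0 (Nat.lt_succ_diag_r N0)).
  unfold adjacent, parent in Hn, Ha. cbn [fst snd] in Hn, Ha.
  rewrite H2M in Ha. fold M in Hn.
  rewrite <- !Z.div_div in Ha by lia.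
  destruct Ha as [_ Ha].
  assert (Hn' : Z.abs (k / M - k' / M) <> 1) by (intro; apply Hn; split; auto).
  pose proof (Z.div_mod k M ltac:(lia)). pose proof (Z.mod_pos_bound k M HM).
  pose proof (Z.div_mod k' M ltac:(lia)). pose proof (Z.mod_pos_bound k' M HM).
  set (A := k / M) in *. set (A' := k' / M) in *.
  pose proof (Z.div_mod A 2 ltac:(lia)). pose proof (Z.mod_pos_bound A 2 ltac:(lia)).
  pose proof (Z.div_mod A' 2 ltac:(lia)). pose proof (Z.mod_pos_bound A' 2 ltac:(lia)).
  set (r := k mod M) in *. set (r' := k' mod M) in *.
  assert (HA : A - A' = 2 \/ A - A' = 3 \/ A - A' = -2 \/ A - A' = -3) by lia.
  clearbody A A' r r'.
  destruct HA as [E|[E|[E|E]]]; replace A with (A' + (A - A')) in * by lia; rewrite E in *; nia.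
Qed.
Open Scope R_scope.

Definition Pw (j : Z) : R := powerRZ 2 j.
Lemma Pw_pos j : 0 < Pw j. Proof. apply powerRZ_lt; lra. Qed.
Lemma Pw_add a b : Pw (a + b) = Pw a * Pw b.
Proof. unfold Pw. apply powerRZ_add; lra. Qed.
Lemma Pw_nat t : Pw (Z.of_nat t) = 2^t.
Proof. unfold Pw. rewrite pow_powerRZ. reflexivity. Qed.
Lemma Pw_ge1 z : (0 <= z)%Z -> 1 <= Pw z.
Proof. intros. rewrite <- (Z2Nat.id z) by lia. rewrite Pw_nat. apply pow_R1_Rle; lra. Qed.
Lemma Pw_mono a b : (a <= b)%Z -> Pw a <= Pw b.
Proof. intros. replace b with (a + (b - a))%Z by lia. rewrite Pw_add.
  pose proof (Pw_pos a). pose proof (Pw_ge1 (b-a) ltac:(lia)). nra. Qed.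
Lemma Pw_inj a b : Pw a = Pw b -> a = b.
Proof. intros. destruct (Z.lt_trichotomy a b) as [H1|[H1|H1]]; auto.
  - replace b with (a + 1 + (b - a - 1))%Z in H by lia. rewrite !Pw_add in H.
    pose proof (Pw_pos a). pose proof (Pw_ge1 (b-a-1) ltac:(lia)).
    assert (Pw 1 = 2) by (unfold Pw; simpl; ring). nra.
  - replace a with (b + 1 + (a - b - 1))%Z in H by lia. rewrite !Pw_add in H.
    pose proof (Pw_pos b). pose proof (Pw_ge1 (a-b-1) ltac:(lia)).
    assert (Pw 1 = 2) by (unfold Pw; simpl; ring). nra. Qed.

Definition Iv (j s : Z) : R -> Prop :=
  fun x => IZR s * Pw j <= x /\ x < (IZR s + 2) * Pw j.

Lemma dyadic_eq j k x : dyadic (j,k) x <-> IZR k * Pw j <= x < (IZR k + 1) * Pw j.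
Proof. unfold dyadic. simpl. rewrite plus_IZR. reflexivity. Qed.

Lemma msum_iv j k k' x : msum (dyadic (j,k)) (dyadic (j,k')) x <-> Iv j (k+k') x.
Proof.
  unfold msum, Iv. rewrite plus_IZR. pose proof (Pw_pos j). split.
  - intros [a [b [Ha [Hb E]]]]. apply dyadic_eq in Ha. apply dyadic_eq in Hb. subst. lra.
  - intros Hx. set (t := (x - (IZR k + IZR k') * Pw j)/2).
    exists (IZR k * Pw j + t), (IZR k' * Pw j + t).
    rewrite !dyadic_eq. unfold t. repeat split; lra.
Qed.

Lemma Iv_unique j s j' s' : (forall x, Iv j s x <-> Iv j' s' x) -> j = j' /\ s = s'.
Proof.
  intros H. unfold Iv in H. pose proof (Pw_pos j) as P1. pose proof (Pw_pos j') as P2.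
  assert (L : IZR s * Pw j = IZR s' * Pw j').
  { destruct (H (IZR s * Pw j)) as [H1 _]. destruct (H (IZR s' * Pw j')) as [_ H2].
    assert (A := H1 ltac:(lra)). assert (B := H2 ltac:(lra)). lra. }
  assert (Rr : (IZR s + 2) * Pw j = (IZR s' + 2) * Pw j').
  { destruct (Rtotal_order ((IZR s + 2) * Pw j) ((IZR s' + 2) * Pw j')) as [T|[T|T]]; auto.
    - destruct (H ((IZR s + 2) * Pw j)) as [_ H2]. assert (B := H2 ltac:(lra)). lra.
    - destruct (H ((IZR s' + 2) * Pw j')) as [H1 _]. assert (B := H1 ltac:(lra)). lra. }
  assert (E : Pw j = Pw j') by lra. apply Pw_inj in E. subst j'. split; auto.
  apply eq_IZR. apply Rmult_eq_reg_r with (Pw j); auto. lra.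
Qed.

Definition IvP (J : R -> Prop) (p : Z * Z) : Prop := forall x, J x <-> Iv (fst p) (snd p) x.

Definition Rmap_gen (F : Z -> Z -> para) (J : R -> Prop) : para :=
  match excluded_middle_informative (exists p, IvP J p) with
  | left h => let p := proj1_sig (constructive_indefinite_description _ h) in F (fst p) (snd p)
  | right _ => Para (0,0)%R (1,0)%R (0,1)%R
  end.

Lemma Rmap_gen_eq F J j s : IvP J (j,s) -> Rmap_gen F J = F j s.
Proof.
  intros H. unfold Rmap_gen. destruct excluded_middle_informative as [h|h].
  - destruct (constructive_indefinite_description _ h) as [[j' s'] Hp]. simpl.
    assert (forall x, Iv j s x <-> Iv j' s' x).
    { intro x. unfold IvP in *. simpl in *. rewrite <- H, Hp. tauto. }
    apply Iv_unique in H0. destruct H0; subst; auto.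
  - exfalso. apply h. exists (j,s). auto.
Qed.

Lemma Rmap_gen_cases F J : Rmap_gen F J = Para (0,0)%R (1,0)%R (0,1)%R \/ exists j s, Rmap_gen F J = F j s.
Proof. unfold Rmap_gen. destruct excluded_middle_informative; [right; eauto|left; auto]. Qed.
Open Scope R_scope.

Lemma IZR_M n : IZR (2^Z.of_nat (2*n+6))%Z = 4 * Gc n.
Proof. rewrite <- pow_IZR. unfold Gc. replace (2*n+6)%nat with (2*(n+3))%nat by lia.
  rewrite pow_mult. replace (n+3)%nat with (S (n+2)) by lia. simpl.
  replace (2*(2*1)) with 4 by ring. ring. Qed.

Definition ParZ n j s := parR n (Pw j) (IZR s).

Lemma pair_info n d d' : in_Rplus d -> in_Rplus d' -> sim (S (2*n+6)) d d' ->
  fst d = fst d' /\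
  (IZR (2^Z.of_nat (2*n+6))%Z + 1 <= Rabs (IZR (snd d - snd d')) <= 4 * IZR (2^Z.of_nat (2*n+6))%Z - 1) /\
  3 <= IZR (snd d + snd d') /\
  Rmap_gen (ParZ n) (msum (dyadic d) (dyadic d')) = ParZ n (fst d) (snd d + snd d').
Proof.
  intros Hd Hd' Hs. unfold in_Rplus in *.
  destruct (sim_gap _ d d' Hd Hd' Hs) as [Hj Hg].
  assert (HM : (2 <= 2^Z.of_nat (2*n+6))%Z).
  { replace (Z.of_nat (2*n+6)) with (1 + Z.of_nat (2*n+5))%Z by lia.
    rewrite Z.pow_add_r by lia. pose proof (Z.pow_pos_nonneg 2 (Z.of_nat (2*n+5)) ltac:(lia) ltac:(lia)). lia. }
  split; auto. split; [|split].
  - rewrite <- abs_IZR, <- plus_IZR, <- mult_IZR, <- minus_IZR. split; apply IZR_le; lia.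
  - apply IZR_le. lia.
  - apply Rmap_gen_eq. destruct d as [j k], d' as [j' k']. simpl in *. subst j'.
    intro x. simpl. apply msum_iv.
Qed.

Lemma diff_bound (Mr P k k' a b : R) : 0 < P ->
  Mr + 1 <= Rabs (k - k') <= 4*Mr - 1 ->
  k * P <= a < (k+1)*P -> k' * P <= b < (k'+1)*P ->
  Mr * P / 2 <= Rabs ((b-a)/2) <= 2*Mr*P.
Proof.
  intros HP Hg Ha Hb. unfold Rabs in *.
  destruct (Rcase_abs (k - k')); destruct (Rcase_abs ((b-a)/2)); split; nra.
Qed.
Open Scope R_scope.

Lemma jbound n a b : (Pw a)^2 <= 201 * Gc n ^ 3 * (Pw b)^2 -> (a - b <= Z.of_nat (3*n+9))%Z.
Proof.
  intros Hp. destruct (Z_le_gt_dec (a - b) (Z.of_nat (3*n+9))) as [h|h]; auto. exfalso.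
  assert (E : Pw a = Pw b * Pw (a - b)) by (rewrite <- Pw_add; f_equal; lia).
  assert (Hm : Pw (Z.of_nat (3*n+10)) <= Pw (a - b)) by (apply Pw_mono; lia).
  rewrite Pw_nat in Hm.
  assert (H4 : (2^(3*n+10))^2 = 256 * Gc n ^ 3).
  { unfold Gc. rewrite <- !pow_mult. rewrite Nat.mul_comm, pow_mult.
    replace (2^2) with 4 by ring. replace (3*n+10)%nat with (4 + (n+2)*3)%nat by lia.
    rewrite pow_add, pow_mult. ring. }
  pose proof (Pw_pos b). pose proof (G_ge1 n).
  assert (0 < Gc n ^ 3) by (apply pow_lt; lra).
  assert (0 <= 2^(3*n+10)) by (apply pow_le; lra).
  assert ((2^(3*n+10))^2 <= (Pw (a-b))^2) by (apply pow_incr; lra).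
  rewrite E in Hp. rewrite Rpow_mult_distr in Hp.
  assert (0 < Pw b ^ 2) by (apply pow_lt; lra).
  nra.
Qed.

Lemma kbound (P1 Q s s1 k1 k1' Mr T2 : R) : 0 < P1 -> 0 < Q -> Q <= T2 ->
  Rabs ((s+1)*(P1*Q) - (s1+1)*P1) <= 2*(P1*Q) + 2*P1 ->
  s1 = k1 + k1' -> Rabs (k1 - k1') <= 4*Mr ->
  Rabs (k1 - ((s+1)*Q - 1)/2) <= 2*Mr + T2 + 1 /\ Rabs (k1' - ((s+1)*Q - 1)/2) <= 2*Mr + T2 + 1.
Proof.
  intros HP HQ HT Hx Hs Hk.
  assert (Hx' : Rabs ((s+1)*Q - (s1+1)) <= 2*Q + 2).
  { replace ((s+1)*(P1*Q) - (s1+1)*P1) with (P1 * ((s+1)*Q - (s1+1))) in Hx by ring.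
    rewrite Rabs_mult, (Rabs_right P1) in Hx by lra.
    apply Rmult_le_reg_l with P1; auto. lra. }
  apply Rabs_inv in Hx'. apply Rabs_inv in Hk. subst s1.
  split; apply Rabs_le; split; lra.
Qed.

Lemma up_bound (z c B : R) (zi : Z) : z = IZR zi -> Rabs (z - c) <= B ->
  (- up B - 1 <= zi - up c < up B)%Z.
Proof.
  intros -> Hb. apply Rabs_inv in Hb. destruct (archimed c) as [c1 c2]. destruct (archimed B) as [b1 b2].
  split.
  - apply le_IZR. rewrite minus_IZR, minus_IZR, opp_IZR. lra.
  - apply lt_IZR. rewrite minus_IZR. lra.
Qed.
Open Scope R_scope.

Definition Zr (lo : Z) (len : nat) : list Z := map (fun i => (lo + Z.of_nat i)%Z) (seq 0 len).

Lemma Zr_in lo len z : (lo <= z < lo + Z.of_nat len)%Z -> In z (Zr lo len).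
Proof. intros H. unfold Zr. apply in_map_iff. exists (Z.to_nat (z - lo)). split.
  rewrite Z2Nat.id; lia. apply in_seq. lia. Qed.

Lemma Zr_len lo len : length (Zr lo len) = len.
Proof. unfold Zr. rewrite length_map, length_seq. auto. Qed.

Theorem mainTheorem11 :
  forall l : nat, (1 < l)%nat -> Nat.Odd l ->
  exists N : nat,
  exists Rmap : (R -> Prop) -> para,
    (forall J : R -> Prop, nondegenerate (Rmap J)) /\
    (forall d d' : Z * Z, in_Rplus d -> in_Rplus d' -> sim N d d' ->
       forall p, S_ell l (dyadic d) (dyadic d') p ->
         pset (Rmap (msum (dyadic d) (dyadic d'))) p) /\
    exists beta : R, 0 < beta /\
    exists C : nat,
      forall d d' : Z * Z, in_Rplus d -> in_Rplus d' -> sim N d d' ->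
      forall s : list ((Z * Z) * (Z * Z)),
        NoDup s ->
        (forall q, In q s ->
           in_Rplus (fst q) /\ in_Rplus (snd q) /\ sim N (fst q) (snd q) /\
           exists x : R * R,
             dilate (1 + beta) (Rmap (msum (dyadic d) (dyadic d'))) x /\
             dilate (1 + beta) (Rmap (msum (dyadic (fst q)) (dyadic (snd q)))) x) ->
        (length s <= C)%nat.
Proof.
  intros l Hl _.
  destruct l as [|[|n]]; [lia|lia|]. replace (S (S n)) with (n+2)%nat by lia.
  exists (S (2*n+6)), (Rmap_gen (ParZ n)).
  assert (HMr : IZR (2^Z.of_nat (2*n+6))%Z = 4 * Gc n) by apply IZR_M.
  split; [|split].
  - intro J. destruct (Rmap_gen_cases (ParZ n) J) as [E|[j [s E]]]; rewrite E.
    + unfold nondegenerate; simpl; lra.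
    + apply parR_nondeg, Pw_pos.
  - intros d d' Hd Hd' Hs p [a [b [Ha [Hb Hp]]]].
    destruct (pair_info n d d' Hd Hd' Hs) as [Hj [Hg [H3 HR]]]. rewrite HR. subst p.
    destruct d as [j k], d' as [j' k']. simpl in *. subst j'. unfold in_Rplus in *. simpl in *.
    apply dyadic_eq in Ha. apply dyadic_eq in Hb.
    pose proof (Pw_pos j) as HP.
    assert (0 <= IZR k) by (apply IZR_le; lia). assert (0 <= IZR k') by (apply IZR_le; lia).
    unfold ParZ. apply contain; auto; try nra.
    + rewrite plus_IZR. lra.
    + rewrite minus_IZR in Hg. rewrite HMr in Hg.
      pose proof (diff_bound (4*Gc n) (Pw j) (IZR k) (IZR k') a b HP Hg Ha Hb). lra.
  - pose proof (betac_pos n) as [Hb0 _].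
    exists (betac n). split; auto.
    set (T := (3*n+9)%nat).
    set (Bv := 2 * (4 * Gc n) + 2^T + 1).
    set (UB := up Bv).
    set (LB := Z.to_nat (2*UB+1)).
    exists ((2*T+1)*((2*T+1)*(LB*LB)))%nat.
    intros d d' Hd Hd' Hs s Hnd Hall.
    destruct (pair_info n d d' Hd Hd' Hs) as [Hj [Hg [H3 HR]]]. rewrite HR in Hall.
    destruct d as [j k], d' as [j' k']. cbn [fst snd] in *. subst j'.
    set (cq := fun j1 : Z => ((IZR (k+k') + 1) * Pw (j - j1) - 1)/2).
    set (f := fun q : (Z*Z)*(Z*Z) =>
      ((fst (fst q) - j)%Z, ((fst (snd q) - j)%Z, ((snd (fst q) - up (cq (fst (fst q))))%Z,
                                          (snd (snd q) - up (cq (fst (fst q))))%Z)))).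
    set (box := list_prod (Zr (- Z.of_nat T) (2*T+1)) (list_prod (Zr (- Z.of_nat T) (2*T+1))
                 (list_prod (Zr (-UB-1) LB) (Zr (-UB-1) LB)))).
    assert (Hinj : Injective f).
    { intros [[a1 b1] [c1 d1]] [[a2 b2] [c2 d2]] E. unfold f in E. simpl in E.
      injection E as E1 E2 E3 E4.
      assert (a1 = a2) by lia. subst a2. f_equal; f_equal; lia. }
    assert (Hlen : length box = ((2*T+1)*((2*T+1)*(LB*LB)))%nat).
    { unfold box. rewrite !length_prod, !Zr_len. auto. }
    eapply Nat.le_trans; [|apply Nat.eq_le_incl; exact Hlen].
    rewrite <- (length_map f s).
    apply NoDup_incl_length. apply Injective_map_NoDup; auto.
    intros z Hz. apply in_map_iff in Hz. destruct Hz as [q [Hfq Hq]]. subst z.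
    destruct (Hall q Hq) as [Hq1 [Hq2 [Hq3 [[x y] [D1 D2]]]]].
    destruct (pair_info n _ _ Hq1 Hq2 Hq3) as [Hj1 [Hg1 [H31 HR1]]]. rewrite HR1 in D2.
    destruct q as [[j1 k1] [j1' k1']]. cbn [fst snd] in *. subst j1'.
    unfold ParZ in D1, D2.
    pose proof (Pw_pos j) as HP. pose proof (Pw_pos j1) as HP1.
    destruct (compare n _ _ _ _ x y HP HP1 H3 H31 D1 D2) as [C1 C2].
    destruct (compare n _ _ _ _ x y HP1 HP H31 H3 D2 D1) as [C3 _].
    apply jbound in C1. apply jbound in C3.
    assert (HQ : Pw (j - j1) <= 2^T).
    { rewrite <- Pw_nat. apply Pw_mono. unfold T. lia. }
    assert (EP : Pw j = Pw j1 * Pw (j - j1)) by (rewrite <- Pw_add; f_equal; lia).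
    rewrite EP in C2.
    assert (Hk : Rabs (IZR k1 - IZR k1') <= 4 * (4 * Gc n)).
    { rewrite <- minus_IZR. lra. }
    destruct (kbound (Pw j1) (Pw (j - j1)) (IZR (k+k')) (IZR (k1+k1')) (IZR k1) (IZR k1')
                (4 * Gc n) (2^T) HP1 (Pw_pos _) HQ C2 (plus_IZR _ _) Hk) as [K1 K2].
    fold Bv in K1, K2.
    pose proof (up_bound _ _ _ k1 eq_refl K1) as U1.
    pose proof (up_bound _ _ _ k1' eq_refl K2) as U2.
    fold UB in U1, U2.
    assert (HUB : (0 <= UB)%Z).
    { apply le_IZR. destruct (archimed Bv). pose proof (G_ge1 n).
      assert (0 <= 2^T) by (apply pow_le; lra). unfold UB. unfold Bv in *. lra. }
    unfold f, box. cbn [fst snd]. unfold cq.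
    apply in_prod_iff. split. apply Zr_in. lia.
    apply in_prod_iff. split. apply Zr_in. lia.
    apply in_prod_iff. split; apply Zr_in; unfold LB; rewrite Z2Nat.id by lia; lia.
Qed.
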